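(* Let $\mathcal D=\mathcal D(\Gamma,(g_i),(\chi_i),(a_{ij}))$ be a datum of finite Cartan type and $\lambda$ a family of linking parameters for $\mathcal D$. Assume one of the following: (1) the Cartan matrix $(a_{ij})$ is simply laced ($a_{ij}\in\{0,-1\}$ for all $i\ne j$) and $\operatorname{ord}(q_{ii})$ is odd for all $1\le i\le\theta$; or (2) $q_{ii}$ is not a root of unity for all $1\le i\le\theta$. Then the linking graph of $(\mathcal D,\lambda)$ is bipartite.
   Context: $k$ is an algebraically closed field of characteristic zero. A datum of finite Cartan type $\mathcal D=\mathcal D(\Gamma,(g_i)_{1\le i\le\theta},(\chi_i)_{1\le i\le\theta},(a_{ij})_{1\le i,j\le\theta})$ consists of an abelian group $\Gamma$, elements $g_i\in\Gamma$, characters $\chi_i:\Gamma\to k^\times$, and a Cartan matrix $(a_{ij})$ of finite type such that, with $q_{ij}=\chi_j(g_i)$, $q_{ij}q_{ji}=q_{ii}^{a_{ij}}$ and $q_{ii}\ne1$ for all $i,j$. Write $i\sim j$ if $i,j$ lie in the same connected component of the Dynkin diagram of $(a_{ij})$; let $\mathcal X$ be the set of connected components of $\{1,\dots,\theta\}$. A family of linking parameters is $\lambda=(\lambda_{ij})_{1\le i,j\le\theta,\,i\not\sim j}$ with $\lambda_{ij}\in k$, $\lambda_{ij}=0$ whenever $g_ig_j=1$ or $\chi_i\chi_j\ne\varepsilon$ (trivial character), and $\lambda_{ji}=-q_{ji}\lambda_{ij}$. Vertices $i,j$ are linkable if $i\not\sim j$, $g_ig_j\ne1$ and $\chi_i\chi_j=\varepsilon$;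 they are linked if moreover $\lambda_{ij}\ne0$. The linking graph of $(\mathcal D,\lambda)$ has vertex set $\mathcal X$, with an edge between $J_1,J_2\in\mathcal X$ iff there are $i\in J_1$, $j\in J_2$ that are linked. A graph is bipartite if its vertex set is a disjoint union of two subsets with no edge inside either subset. *)

(* Defs.v *)
From HB Require Import structures.
From mathcomp Require Import all_boot all_order all_algebra.
Set Implicit Arguments. Unset Strict Implicit. Unset Printing Implicit Defensive.
Import Order.TTheory GRing.Theory Num.Theory.
Local Open Scope ring_scope.

(* A character of the abelian group Γ (written additively as a zmodType)
   with values in k^× : a group homomorphism Γ -> k^×. *)
Definition is_character (G : zmodType) (k : fieldType) (chi : G -> k) : Prop :=
  (forall g, chi g != 0) /\ chi 0 = 1 /\ (forall a b, chi (a + b) = chi a * chi b).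

Definition is_cartan_matrix (n : nat) (A : 'M[int]_n) : Prop :=
  (forall i, A i i = 2%:Z) /\
  (forall i j, i != j -> A i j <= 0) /\
  (forall i j, (A i j == 0) = (A j i == 0)).

Definition principal_submx (n : nat) (A : 'M[int]_n) (S : {set 'I_n}) :
  'M[int]_#|S| :=
  mxsub (@enum_val _ (mem S)) (@enum_val _ (mem S)) A.

Definition finite_type_cartan (n : nat) (A : 'M[int]_n) : Prop :=
  is_cartan_matrix A /\ forall S : {set 'I_n}, 0 < \det (principal_submx A S).

Definition dynkin_adj (n : nat) (A : 'M[int]_n) : rel 'I_n :=
  [rel i j | (i != j) && (A i j != 0)].
Definition same_comp (n : nat) (A : 'M[int]_n) (i j : 'I_n) : bool :=
  connect (dynkin_adj A) i j.

Definition components (n : nat) (A : 'M[int]_n) : {set {set 'I_n}} :=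
  [set [set j | same_comp A i j] | i : 'I_n].

Definition q_of (G : zmodType) (k : fieldType) (n : nat)
  (g : 'I_n -> G) (chi : 'I_n -> G -> k) (i j : 'I_n) : k := chi j (g i).

Definition finite_cartan_datum (G : zmodType) (k : fieldType) (n : nat)
  (g : 'I_n -> G) (chi : 'I_n -> G -> k) (A : 'M[int]_n) : Prop :=
  (forall i, is_character (chi i)) /\ finite_type_cartan A /\
  (forall i j, q_of g chi i j * q_of g chi j i = q_of g chi i i ^ (A i j)) /\
  (forall i, q_of g chi i i != 1).

Definition char_prod_trivial (G : zmodType) (k : fieldType) (chi1 chi2 : G -> k) :=
  forall x, chi1 x * chi2 x = 1.

Definition linkable (G : zmodType) (k : fieldType) (n : nat)
  (g : 'I_n -> G) (chi : 'I_n -> G -> k) (A : 'M[int]_n) (i j : 'I_n) : Prop :=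
  ~~ same_comp A i j /\ g i + g j != 0 /\ char_prod_trivial (chi i) (chi j).

Definition linking_parameters (G : zmodType) (k : fieldType) (n : nat)
  (g : 'I_n -> G) (chi : 'I_n -> G -> k) (A : 'M[int]_n)
  (lam : 'I_n -> 'I_n -> k) : Prop :=
  forall i j, ~~ same_comp A i j ->
    ((g i + g j = 0 \/ ~ char_prod_trivial (chi i) (chi j)) -> lam i j = 0) /\
    lam j i = - (q_of g chi j i) * lam i j.

Definition linked (G : zmodType) (k : fieldType) (n : nat)
  (g : 'I_n -> G) (chi : 'I_n -> G -> k) (A : 'M[int]_n)
  (lam : 'I_n -> 'I_n -> k) (i j : 'I_n) : Prop :=
  linkable g chi A i j /\ lam i j != 0.

Definition linking_edge (G : zmodType) (k : fieldType) (n : nat)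
  (g : 'I_n -> G) (chi : 'I_n -> G -> k) (A : 'M[int]_n)
  (lam : 'I_n -> 'I_n -> k) (J1 J2 : {set 'I_n}) : Prop :=
  exists i j, [/\ i \in J1, j \in J2 & linked g chi A lam i j].

Definition bipartite (T : finType) (V : {set T}) (E : T -> T -> Prop) : Prop :=
  exists V1 V2 : {set T},
    [/\ V1 :|: V2 = V, [disjoint V1 & V2],
        (forall x y, x \in V1 -> y \in V1 -> ~ E x y) &
        (forall x y, x \in V2 -> y \in V2 -> ~ E x y)].

Definition linking_graph_bipartite (G : zmodType) (k : fieldType) (n : nat)
  (g : 'I_n -> G) (chi : 'I_n -> G -> k) (A : 'M[int]_n)
  (lam : 'I_n -> 'I_n -> k) : Prop :=
  bipartite (components A) (linking_edge g chi A lam).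

Definition simply_laced (n : nat) (A : 'M[int]_n) : Prop :=
  forall i j, i != j -> (A i j = 0) \/ (A i j = -1).

Definition odd_order (k : fieldType) (x : k) : Prop :=
  exists m : nat, odd m /\ m.-primitive_root x.

Definition not_root_of_unity (k : fieldType) (x : k) : Prop :=
  forall m : nat, (0 < m)%N -> x ^+ m != 1.

(* Main.v *)
Require Import Defs.
From mathcomp Require Import all_boot all_order all_algebra.
From Stdlib Require Import ClassicalEpsilon FunctionalExtensionality PropExtensionality.
Local Open Scope ring_scope.
Import GRing.Theory.

Section Col.
Variable k : fieldType.
Variable E : k -> k -> Prop.
Hypothesis Erefl : forall x, E x x.
Hypothesis Esym : forall x y, E x y -> E y x.
Hypothesis Etrans : forall x y z, E x y -> E y z -> E x z.
Hypothesis Einv : forall x y, E x y -> E x^-1 y^-1.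

Definition repE (x : k) : k := epsilon (inhabits (0 : k)) (fun y => E y x \/ E y x^-1).
Definition colE (x : k) : bool :=
  if excluded_middle_informative (E (repE x) x) then true else false.

Lemma repE_spec x : E (repE x) x \/ E (repE x) x^-1.
Proof. apply: (epsilon_spec (inhabits (0:k)) (fun y => E y x \/ E y x^-1)). by exists x; left. Qed.

Lemma repE_eq x y : (forall z, (E z x \/ E z x^-1) <-> (E z y \/ E z y^-1)) -> repE x = repE y.
Proof.
move=> H; rewrite /repE; congr epsilon; apply: functional_extensionality => z.
by apply: propositional_extensionality.
Qed.

Lemma colE_E x y : E x y -> colE x = colE y.
Proof.
move=> Hxy.
have Hr : repE x = repE y.
  apply: repE_eq => z; split; case=> H.
  - by left; apply: Etrans _ _ _ H Hxy.
  - by right; apply: Etrans _ _ _ H (Einv _ _ Hxy).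
  - by left; apply: Etrans _ _ _ H (Esym _ _ Hxy).
  - by right; apply: Etrans _ _ _ H (Einv _ _ (Esym _ _ Hxy)).
rewrite /colE Hr.
case: excluded_middle_informative => H1; case: excluded_middle_informative => H2 //.
- by case: H2; apply: Etrans _ _ _ H1 Hxy.
- by case: H1; apply: Etrans _ _ _ H2 (Esym _ _ Hxy).
Qed.

Lemma colE_inv x : ~ E x x^-1 -> colE x^-1 = ~~ colE x.
Proof.
move=> Hn.
have Hr : repE x^-1 = repE x.
  by apply: repE_eq => z; rewrite invrK; split; case; auto.
rewrite /colE Hr.
case: excluded_middle_informative => H1; case: excluded_middle_informative => H2 //.
- by case: Hn; apply: (Etrans _ _ _ (Esym _ _ H2) H1).
- by case: (repE_spec x).
Qed.
End Col.

Lemma negpow (k : fieldType) (x : k) (z : int) : z <= 0 -> z != 0 ->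
  exists m, (0 < m)%N /\ x ^ z = (x ^+ m)^-1.
Proof.
case: z => [n|n] H1 H2.
- by move: H1 H2; case: n.
- by exists n.+1.
Qed.

Lemma general (k : fieldType) (G : zmodType) (n : nat) (g : 'I_n -> G) (chi : 'I_n -> G -> k)
  (A : 'M[int]_n) (lam : 'I_n -> 'I_n -> k) (E : k -> k -> Prop) :
  finite_cartan_datum g chi A ->
  (forall x, E x x) -> (forall x y, E x y -> E y x) ->
  (forall x y z, E x y -> E y z -> E x z) -> (forall x y, E x y -> E x^-1 y^-1) ->
  (forall i j, dynkin_adj A i j -> E (q_of g chi i i) (q_of g chi j j)) ->
  (forall i, ~ E (q_of g chi i i) (q_of g chi i i)^-1) ->
  linking_graph_bipartite g chi A lam.
Proof.
move=> [Hch [_ [Hq _]]] Er Es Et Ei Hadj Hn.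
set q := fun i => q_of g chi i i.
have Hcomp : forall i j, same_comp A i j -> E (q i) (q j).
  move=> i j /connectP [p Hp ->]; elim: p i Hp => [|a p IH] i /=; first by [].
  by move=> /andP [Ha Hp]; exact: (Et _ _ _ (Hadj _ _ Ha) (IH _ Hp)).
pose val (J : {set 'I_n}) := if [pick j in J] is Some j then q j else 0.
have Hval : forall J i, J \in components A -> i \in J -> E (val J) (q i).
  move=> J i /imsetP [i0 _ ->] Hi; rewrite /val.
  case: pickP => [j Hj|/(_ i)]; last by rewrite Hi.
  rewrite inE in Hi; rewrite inE in Hj.
  exact: (Et _ _ _ (Es _ _ (Hcomp _ _ Hj)) (Hcomp _ _ Hi)).
have Hlink : forall i j, linked g chi A lam i j -> q j = (q i)^-1.
  move=> i j [[Hnc [_ Htriv]] _].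
  have Aij : A i j = 0.
    apply/eqP; apply: contraNT Hnc => HA.
    have [->|Hne] := eqVneq i j; first exact: connect0.
    by apply: connect1; rewrite /dynkin_adj /= Hne HA.
  have H1 := Hq i j; rewrite Aij expr0z in H1.
  have nz : forall l x, chi l x != 0 by move=> l x; case: (Hch l).
  have Hi : q i = (chi j (g i))^-1.
    by apply: (mulIf (nz j (g i))); rewrite mulVf ?nz // /q /q_of Htriv.
  have Hj : q j = (chi i (g j))^-1.
    by apply: (mulIf (nz i (g j))); rewrite mulVf ?nz // /q /q_of mulrC Htriv.
  rewrite Hj Hi invrK; apply: (mulIf (nz i (g j))); rewrite mulVf ?nz //.
pose c (J : {set 'I_n}) := @colE k E (val J).
exists [set J in components A | c J], [set J in components A | ~~ c J]; split.
- apply/setP => J; rewrite !inE; by case: (J \in components A); case: (c J).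
- rewrite disjoint_subset; apply/subsetP => J; rewrite !inE.
  by case: (J \in components A); case: (c J).
- move=> J1 J2; rewrite !inE => /andP [H1 c1] /andP [H2 c2] [i [j [Hi Hj Hl]]].
  have e1 := @colE_E k E Es Et Ei _ _ (Hval _ _ H1 Hi).
  have e2 := @colE_E k E Es Et Ei _ _ (Hval _ _ H2 Hj).
  move: c1 c2; rewrite /c e1 e2 (Hlink _ _ Hl) (@colE_inv k E Er Es Et); last exact: Hn.
  by move=> ->.
- move=> J1 J2; rewrite !inE => /andP [H1 c1] /andP [H2 c2] [i [j [Hi Hj Hl]]].
  have e1 := @colE_E k E Es Et Ei _ _ (Hval _ _ H1 Hi).
  have e2 := @colE_E k E Es Et Ei _ _ (Hval _ _ H2 Hj).
  move: c1 c2; rewrite /c e1 e2 (Hlink _ _ Hl) (@colE_inv k E Er Es Et); last exact: Hn.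
  by move=> /negPf ->.
Qed.

Theorem lemma3p2 (k : closedFieldType) (Hchar : [pchar k] =i pred0)
  (G : zmodType) (n : nat) (g : 'I_n -> G) (chi : 'I_n -> G -> k)
  (A : 'M[int]_n) (lam : 'I_n -> 'I_n -> k) :
  finite_cartan_datum g chi A ->
  linking_parameters g chi A lam ->
  (simply_laced A /\ (forall i, odd_order (q_of g chi i i))) \/
  (forall i, not_root_of_unity (q_of g chi i i)) ->
  linking_graph_bipartite g chi A lam.
Proof.
move=> Hd _ Hcase.
have [Hch [[[_ [Hneg Hsym]] _] [Hq Hne1]]] := Hd.
have Hadj0 : forall i j, dynkin_adj A i j ->
   [/\ A i j <= 0, A i j != 0, A j i <= 0, A j i != 0 &
    q_of g chi i i ^ A i j = q_of g chi j j ^ A j i].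
  move=> i j /andP [Hij HA]; split => //.
  - exact: Hneg.
  - by apply: Hneg; rewrite eq_sym.
  - by rewrite -Hsym.
  - by rewrite -Hq -Hq mulrC.
have nz : forall i, q_of g chi i i != 0 by move=> i; case: (Hch i) => H _; apply: H.
case: Hcase => [[Hsl Hodd]|Hnr].
- apply: (@general _ _ _ _ _ _ _ (fun x y => x = y) Hd).
  + by [].
  + by move=> x y; apply: esym.
  + by move=> x y z; apply: etrans.
  + by move=> x y H; apply: (congr1 _ H).
  + move=> i j Hadj; have [_ Hij _ Hji Heq] := Hadj0 i j Hadj.
    move: Hadj => /andP [Hne _].
    have [Ha|Ha] := Hsl i j Hne; first by rewrite Ha in Hij.
    have Hne' : j != i by rewrite eq_sym.
    have [Hb|Hb] := Hsl j i Hne' ; first by rewrite Hb in Hji.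
    by move: Heq; rewrite Ha Hb !exprN1; apply: invr_inj.
  + move=> i Heq.
    have H2 : q_of g chi i i ^+ 2 = 1.
      by rewrite expr2 {2}Heq mulfV ?nz.
    have [m [Hm Hp]] := Hodd i.
    have Hd2 : (m %| 2)%N by rewrite (prim_order_dvd Hp) H2.
    have Hm1 : m = 1%N.
      case: m Hm Hp Hd2 => [|[|[|m]]] //= Hm Hp Hd2.
    have := prim_expr_order Hp; rewrite Hm1 expr1 => H1.
    by move: (Hne1 i); rewrite H1 eqxx.
- apply: (@general _ _ _ _ _ _ _
    (fun x y => exists a b, [/\ (0 < a)%N, (0 < b)%N & x ^+ a = y ^+ b]) Hd).
  + by move=> x; exists 1%N, 1%N.
  + by move=> x y [a [b [Ha Hb H]]]; exists b, a.
  + move=> x y z [a [b [Ha Hb H]]] [c [d [Hc Hd' H']]].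
    exists (a * c)%N, (d * b)%N; split; rewrite ?muln_gt0 ?Ha ?Hb ?Hc ?Hd' //.
    by rewrite !exprM H -exprM mulnC exprM H' -!exprM.
  + move=> x y [a [b [Ha Hb H]]]; exists a, b; split => //.
    by rewrite !exprVn H.
  + move=> i j Hadj; have [Hij0 Hij Hji0 Hji Heq] := Hadj0 i j Hadj.
    have [a [Ha Ea]] := @negpow _ (q_of g chi i i) _ Hij0 Hij.
    have [b [Hb Eb]] := @negpow _ (q_of g chi j j) _ Hji0 Hji.
    exists a, b; split => //; apply: invr_inj; by rewrite -Ea -Eb.
  + move=> i [a [b [Ha Hb H]]].
    have := Hnr i (a + b)%N; rewrite addn_gt0 Ha /= exprD H exprVn mulVf //.
    by move/(_ isT); rewrite eqxx.
  by rewrite expf_neq0 ?nz.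
Qed.
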